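(* Let $\Lambda=\lambda+\ell\Lambda_0+z\delta$ be a dominant weight (with $\lambda$ a dominant integral weight of the finite root system, $\ell\in\mathbb{N}$ its level, $z\in\mathbb{Z}$), let $x,y\in V_0$ and $u\in W_0$. Then $$\mathcal{L}_\Lambda(t_{x+y}u)=\mathcal{L}_\Lambda(t_xu)+\mathcal{L}_\Lambda(t_yu)+\mathcal{D}_\Lambda(u,x,y),\qquad \mathcal{D}_\Lambda(u,x,y)=h\ell\,(x|y)-\mathcal{L}_\lambda(u).$$ In particular, for every $0\le i\le n$, $$\mathcal{L}_{\Lambda_i}(t_xt_y)=\mathcal{L}_{\Lambda_i}(t_x)+\mathcal{L}_{\Lambda_i}(t_y)+h\frac{a_i^\vee}{a_0^\vee}(x|y).$$
   Context: Let $A=(a_{ij})_{0\le i,j\le n}$ be a generalized Cartan matrix of affine type with realization $\Delta=\{\alpha_0,\dots,\alpha_n\}\subset\mathfrak h^*$, $\Delta^\vee=\{\alpha_0^\vee,\dots,\alpha_n^\vee\}\subset\mathfrak h$, $\dim\mathfrak h=n+2$, $\langle\alpha_j,\alpha_i^\vee\rangle=a_{ij}$. Let $(a_0,\dots,a_n)$, $(a_0^\vee,\dots,a_n^\vee)$ be the primitive positive integer vectors in the kernels of $A$ and $A^T$; $h=\sum a_i$, $\delta=\sum a_i\alpha_i$, $c=\sum a_i^\vee\alpha_i^\vee$. $V_0=\bigoplus_{i=1}^n\mathbb{R}\alpha_i$ with the standard invariant symmetric form $(\cdot|\cdot)$ (with $(\alpha_i|\alpha_j)=a_i^\vee a_i^{-1}a_{ij}$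 for $i,j\ge1$, $(\delta|\cdot)$ vanishing on $V_0$ and $\delta$). $W_0=\langle s_1,\dots,s_n\rangle$ with $s_i(x)=x-\langle x,\alpha_i^\vee\rangle\alpha_i$. $\omega_i\in V_0$ are the finite fundamental weights, $\Lambda_i$ the affine fundamental weights ($\langle\Lambda_i,\alpha_j^\vee\rangle=\delta_{ij}$) with $\Lambda_i=\frac{a_i^\vee}{a_0^\vee}\Lambda_0+\omega_i$; $\rho^\vee\in\mathfrak h$ satisfies $\langle\alpha_i,\rho^\vee\rangle=1$ for all $i$. For $x\in V_0$, $t_x\in GL(\mathfrak h^* )$ is $t_x(v)=v+\langle v,c\rangle x-((v|x)+\frac12|x|^2\langle v,c\rangle)\delta$. For any $g\in GL(\mathfrak h^* )$ and weight $\mu$, $\mathcal{L}_\mu(g)=\langle\mu-g\mu,\rho^\vee\rangle$; in particular $\mathcal{L}_\lambda(u)=\langle\lambda-u\lambda,\rho^\vee\rangle$ for $u\in W_0$. The level of $\Lambda$ is $\ell=\langle\Lambda,c\rangle$. *)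

(* Defs.v *)
(* Affine root system data in coordinates:
   h^* and h are both modelled as 'rV[R]_(n.+2) (dim h = n+2),
   with the pairing <v, w> = sum_k v_k w_k.  Simple roots are indexed by
   'I_n.+1 (index 0 = alpha_0); elements of V_0 are given by their
   coefficient vectors x : 'rV[R]_n on alpha_1..alpha_n (j : 'I_n <-> alpha_{j+1}). *)
From HB Require Import structures.
From mathcomp Require Import all_boot all_order all_algebra.
Set Implicit Arguments.
Unset Strict Implicit.
Unset Printing Implicit Defensive.
Import Order.TTheory GRing.Theory Num.Theory.
Local Open Scope ring_scope.

Section Affine.
Variable R : realFieldType.
Variable n : nat.

Notation hs := 'rV[R]_(n.+2).

Definition pair (v w : hs) : R := \sum_(k < n.+2) v 0 k * w 0 k.

Definition is_GCM (A : 'M[int]_(n.+1)) : Prop :=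
  (forall i, A i i = 2%:Z) /\
  (forall i j, i != j -> A i j <= 0) /\
  (forall i j, (A i j == 0) = (A j i == 0)).

Definition indecomposable (A : 'M[int]_(n.+1)) : Prop :=
  forall S : {set 'I_n.+1}, S != set0 -> S != setT ->
    exists i j, [/\ i \in S, j \notin S & A i j != 0].

Variables (A : 'M[int]_(n.+1)) (alpha alphav : 'I_n.+1 -> hs)
          (a av : 'I_n.+1 -> nat) (rhov : hs).

Definition emb (x : 'rV[R]_n) : hs := \sum_(j < n) x 0 j *: alpha (lift ord0 j).

Definition deltaW : hs := \sum_(i < n.+1) (a i)%:R *: alpha i.
Definition cW : hs := \sum_(i < n.+1) (av i)%:R *: alphav i.
Definition hcox : R := (\sum_(i < n.+1) a i)%:R.

(* (alpha_i | alpha_j) = a_i^v a_i^-1 a_ij on V_0 *)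
Definition form0 (x y : 'rV[R]_n) : R :=
  \sum_(i < n) \sum_(j < n) x 0 i * y 0 j *
     ((av (lift ord0 i))%:R / (a (lift ord0 i))%:R * (A (lift ord0 i) (lift ord0 j))%:~R).

Definition normsq (x : 'rV[R]_n) : R := form0 x x.

(* the normalized invariant form (v | x) for v in h^*, x in V_0:
   (v | alpha_j) = a_j^v a_j^-1 <v, alpha_j^v>   (Kac, (6.1), via nu) *)
Definition ipV (v : hs) (x : 'rV[R]_n) : R :=
  \sum_(j < n) x 0 j * ((av (lift ord0 j))%:R / (a (lift ord0 j))%:R
                         * pair v (alphav (lift ord0 j))).

Definition tr (x : 'rV[R]_n) (v : hs) : hs :=
  v + pair v cW *: emb x - (ipV v x + 2^-1 * normsq x * pair v cW) *: deltaW.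

Definition refl (j : 'I_n) (v : hs) : hs :=
  v - pair v (alphav (lift ord0 j)) *: alpha (lift ord0 j).

Definition word (s : seq 'I_n) : hs -> hs :=
  foldr (fun j f => refl j \o f) id s.

Definition Lf (mu : hs) (g : hs -> hs) : R := pair (mu - g mu) rhov.

Definition LamI (Lam0 : hs) (omega : 'I_n -> 'rV[R]_n) (i : 'I_n.+1) : hs :=
  ((av i)%:R / (av ord0)%:R) *: Lam0 +
  (match unlift ord0 i with Some j => emb (omega j) | None => 0 end).

End Affine.

(* Main.v *)
Require Import Defs.
From HB Require Import structures.
From mathcomp Require Import all_boot all_order all_algebra.
From mathcomp Require Import ring.
Import Order.TTheory GRing.Theory Num.Theory.
Local Open Scope ring_scope.

Lemma zmod3 (V : zmodType) (p q b c : V) : p + b + c - (q + b + c) = p - q.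
Proof. by rewrite -(addrA p) -(addrA q) [q + _]addrC addrKA. Qed.

Section H.
Context {R : realFieldType}.
Context {n : nat}.
Notation hs := 'rV[R]_(n.+2).
Implicit Types (x y z : 'rV[R]_n) (v w u : hs).

Lemma pairC (v w : hs) : pair v w = pair w v.
Proof. by apply: eq_bigr => k _; rewrite mulrC. Qed.
Lemma pairDl (v w u : hs) : pair (v + w) u = pair v u + pair w u.
Proof. rewrite /pair -big_split /=; apply: eq_bigr => k _; by rewrite mxE mulrDl. Qed.
Lemma pairNl (v u : hs) : pair (- v) u = - pair v u.
Proof. rewrite /pair -sumrN; apply: eq_bigr => k _; by rewrite mxE mulNr. Qed.
Lemma pairBl (v w u : hs) : pair (v - w) u = pair v u - pair w u.
Proof. by rewrite pairDl pairNl. Qed.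
Lemma pairZl k (v u : hs) : pair (k *: v) u = k * pair v u.
Proof. rewrite /pair mulr_sumr; apply: eq_bigr => i _; by rewrite mxE mulrA. Qed.
Lemma pair0l (u : hs) : pair 0 u = 0.
Proof. by rewrite /pair big1 // => i _; rewrite mxE mul0r. Qed.
Lemma pair_suml m (F : 'I_m -> hs) u : pair (\sum_(i < m) F i) u = \sum_(i < m) pair (F i) u.
Proof.
elim/big_rec2: _ => [|i y1 y2 _ <-]; first by rewrite pair0l.
by rewrite pairDl.
Qed.
Lemma pairDr (v w u : hs) : pair u (v + w) = pair u v + pair u w.
Proof. by rewrite pairC pairDl !(pairC u). Qed.
Lemma pairZr k (v u : hs) : pair u (k *: v) = k * pair u v.
Proof. by rewrite pairC pairZl pairC. Qed.
Lemma pair_sumr m (F : 'I_m -> hs) u : pair u (\sum_(i < m) F i) = \sum_(i < m) pair u (F i).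
Proof. rewrite pairC pair_suml; apply: eq_bigr => i _; exact: pairC. Qed.

Context {A : 'M[int]_(n.+1)} {alpha alphav : 'I_n.+1 -> hs}
          {a av : 'I_n.+1 -> nat} {rhov : hs}.
Hypothesis hA : forall i, \sum_(j < n.+1) A i j * (a j)%:Z = 0.
Hypothesis hAv : forall j, \sum_(i < n.+1) (av i)%:Z * A i j = 0.
Hypothesis hsym : forall i j, (av i)%:R / (a i)%:R * (A i j)%:~R
               = (av j)%:R / (a j)%:R * (A j i)%:~R :> R.
Hypothesis hpair : forall i j, pair (alpha j) (alphav i) = (A i j)%:~R.
Hypothesis hrho : forall i, pair (alpha i) rhov = 1.

Notation c := (cW alphav av).
Notation d := (deltaW alpha a).
Notation emb := (emb alpha).
Notation tr := (tr A alpha alphav a av).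

Lemma alpha_c k : pair (alpha k) c = 0.
Proof.
rewrite pair_sumr.
transitivity (\sum_(i < n.+1) (((av i)%:Z * A i k)%:~R : R)); last first.
  by rewrite -rmorph_sum /= hAv.
apply: eq_bigr => i _.
by rewrite pairZr hpair rmorphM.
Qed.

Lemma emb_c x : pair (emb x) c = 0.
Proof. by rewrite pair_suml big1 // => j _; rewrite pairZl alpha_c mulr0. Qed.
Lemma delta_c : pair d c = 0.
Proof. by rewrite pair_suml big1 // => j _; rewrite pairZl alpha_c mulr0. Qed.
Lemma delta_av k : pair d (alphav k) = 0.
Proof.
rewrite pair_suml.
transitivity (\sum_(j < n.+1) ((A k j * (a j)%:Z)%:~R : R)); last first.
  by rewrite -rmorph_sum /= hA.
apply: eq_bigr => i _.
by rewrite pairZl hpair rmorphM mulrC.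
Qed.
Lemma emb_rho x : pair (emb x) rhov = \sum_(j < n) x 0 j.
Proof. rewrite pair_suml; apply: eq_bigr => j _; by rewrite pairZl hrho mulr1. Qed.
Lemma delta_rho : pair d rhov = hcox R a.
Proof.
rewrite pair_suml /hcox natr_sum; apply: eq_bigr => j _; by rewrite pairZl hrho mulr1.
Qed.

Lemma ipVDr v x y : ipV alphav a av v (x + y) = ipV alphav a av v x + ipV alphav a av v y.
Proof. rewrite /ipV -big_split /=; apply: eq_bigr => j _; by rewrite mxE mulrDl. Qed.
Lemma ipVDl v w x : ipV alphav a av (v + w) x = ipV alphav a av v x + ipV alphav a av w x.
Proof. rewrite /ipV -big_split /=; apply: eq_bigr => j _; rewrite pairDl /=; ring. Qed.
Lemma ipVZl k v x : ipV alphav a av (k *: v) x = k * ipV alphav a av v x.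
Proof. rewrite /ipV mulr_sumr; apply: eq_bigr => j _; by rewrite pairZl; ring. Qed.
Lemma ipV_delta x : ipV alphav a av d x = 0.
Proof. by rewrite /ipV big1 // => j _; rewrite delta_av !mulr0. Qed.
Lemma ipV_emb x y : ipV alphav a av (emb y) x = form0 A a av x y.
Proof.
rewrite /ipV /form0; apply: eq_bigr => i _.
rewrite pair_suml !mulr_sumr; apply: eq_bigr => j _.
by rewrite pairZl hpair; ring.
Qed.

Lemma form0C x y : form0 A a av x y = form0 A a av y x.
Proof.
rewrite /form0 exchange_big; apply: eq_bigr => i _; apply: eq_bigr => j _.
by rewrite hsym; ring.
Qed.
Lemma form0Dl x y z : form0 A a av (x + y) z = form0 A a av x z + form0 A a av y z.
Proof.
rewrite /form0 -big_split /=; apply: eq_bigr => i _; rewrite -big_split /=; apply: eq_bigr => j _.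
by rewrite mxE; ring.
Qed.
Lemma normsqD x y : normsq A a av (x + y) = normsq A a av x + normsq A a av y + 2 * form0 A a av x y.
Proof.
rewrite /normsq form0Dl form0C form0Dl (form0C y (x + y)) form0Dl (form0C y x).
ring.
Qed.

Lemma tr_c x v : pair (tr x v) c = pair v c.
Proof. by rewrite /tr pairBl pairDl !pairZl emb_c delta_c !mulr0 subr0 addr0. Qed.

Lemma Lf_tr mu g x : Lf rhov mu (tr x \o g) = Lf rhov mu g
  - pair (g mu) c * (\sum_(j < n) x 0 j)
  + (ipV alphav a av (g mu) x + 2^-1 * normsq A a av x * pair (g mu) c) * hcox R a.
Proof.
rewrite /Lf /= /tr !pairBl pairDl !pairZl emb_rho delta_rho; ring.
Qed.

Lemma refl_c j v : pair (refl alpha alphav j v) c = pair v c.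
Proof. by rewrite /refl pairBl pairZl alpha_c mulr0 subr0. Qed.
Lemma word_c s v : pair (word alpha alphav s v) c = pair v c.
Proof. elim: s => //= j s IH; by rewrite refl_c. Qed.

Context {Lam0 : hs}.
Hypothesis hLam0 : forall j, pair Lam0 (alphav j) = (j == ord0)%:R.

Lemma word_shift s v k m : word alpha alphav s (v + k *: Lam0 + m *: d)
   = word alpha alphav s v + k *: Lam0 + m *: d.
Proof.
elim: s => //= j s ->.
rewrite /refl !pairDl !pairZl hLam0 delta_av /= mulr0 mulr0 !addr0.
by rewrite addrAC [_ + k *: _ - _]addrAC.
Qed.

Lemma ipVBl v w x : ipV alphav a av (v - w) x = ipV alphav a av v x - ipV alphav a av w x.
Proof. by rewrite -scaleN1r ipVDl ipVZl mulN1r. Qed.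

Lemma sumD x y : \sum_(j < n) (x + y) 0 j = \sum_(j < n) x 0 j + \sum_(j < n) y 0 j.
Proof. rewrite -big_split /=; apply: eq_bigr => j _; by rewrite mxE. Qed.

Lemma Lam0_c : pair Lam0 c = (av ord0)%:R.
Proof.
rewrite pair_sumr (bigD1 ord0) //= big1 ?addr0.
  by rewrite pairZr hLam0 eqxx mulr1.
by move=> j /negbTE jn; rewrite pairZr hLam0 jn mulr0.
Qed.

Lemma ipV_tr v x y : ipV alphav a av (tr y v) x
  = ipV alphav a av v x + pair v c * form0 A a av x y.
Proof. by rewrite /tr ipVBl ipVDl !ipVZl ipV_delta ipV_emb mulr0 subr0. Qed.
End H.

Theorem theorem2p4 (R : realFieldType) (n : nat)
  (A : 'M[int]_(n.+1)) (alpha alphav : 'I_n.+1 -> 'rV[R]_(n.+2))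
  (a av : 'I_n.+1 -> nat) (rhov Lam0 : 'rV[R]_(n.+2))
  (omega : 'I_n -> 'rV[R]_n) :
  (* A is a generalized Cartan matrix of affine type *)
  is_GCM A -> indecomposable A ->
  (* (a_i), (a_i^v): primitive positive integer vectors in ker A, ker A^T *)
  (forall i, (0 < a i)%N) -> (forall i, \sum_(j < n.+1) A i j * (a j)%:Z = 0) ->
  \big[gcdn/0%N]_(i < n.+1) a i = 1%N ->
  (forall i, (0 < av i)%N) -> (forall j, \sum_(i < n.+1) (av i)%:Z * A i j = 0) ->
  \big[gcdn/0%N]_(i < n.+1) av i = 1%N ->
  (* Kac's labelling of the nodes: a_0^v = 1 *)
  av ord0 = 1%N ->
  (* the standard invariant form is symmetric *)
  (forall i j, (av i)%:R / (a i)%:R * (A i j)%:~R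
               = (av j)%:R / (a j)%:R * (A j i)%:~R :> R) ->
  (* realization *)
  row_free (\matrix_(i < n.+1, k < n.+2) alpha i 0 k) ->
  row_free (\matrix_(i < n.+1, k < n.+2) alphav i 0 k) ->
  (forall i j, pair (alpha j) (alphav i) = (A i j)%:~R) ->
  (* rho^v *)
  (forall i, pair (alpha i) rhov = 1) ->
  (* Lambda_0 and finite fundamental weights omega_1..omega_n in V_0 *)
  (forall j, pair Lam0 (alphav j) = (j == ord0)%:R) ->
  (forall i j : 'I_n, pair (emb alpha (omega i)) (alphav (lift ord0 j)) = (i == j)%:R) ->
  (forall (lam : 'rV[R]_n) (ell : nat) (z : int) (x y : 'rV[R]_n) (s : seq 'I_n),
     let Lam := emb alpha lam + ell%:R *: Lam0 + z%:~R *: deltaW alpha a in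
     let u := word alpha alphav s in
     (* lambda dominant integral for the finite root system *)
     (forall i : 'I_n, exists m : nat, pair (emb alpha lam) (alphav (lift ord0 i)) = m%:R) ->
     (* Lambda dominant of level ell *)
     (forall j, exists m : nat, pair Lam (alphav j) = m%:R) ->
     pair Lam (cW alphav av) = ell%:R ->
     Lf rhov Lam (tr A alpha alphav a av (x + y) \o u)
     = Lf rhov Lam (tr A alpha alphav a av x \o u)
       + Lf rhov Lam (tr A alpha alphav a av y \o u)
       + (hcox R a * ell%:R * form0 A a av x y - Lf rhov (emb alpha lam) u))
  /\
  (forall (i : 'I_n.+1) (x y : 'rV[R]_n),
     let Li := LamI alpha av Lam0 omega i in
     Lf rhov Li (tr A alpha alphav a av x \o tr A alpha alphav a av y)
     = Lf rhov Li (tr A alpha alphav a av x) + Lf rhov Li (tr A alpha alphav a av y)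
       + hcox R a * ((av i)%:R / (av ord0)%:R) * form0 A a av x y).
Proof.
move=> _ _ apos hA _ avpos hAv _ av0 hsym _ _ hpair hrho hLam0 _.
split.
- move=> lam ell z x y s Lam u _ _ hc.
  rewrite !(Lf_tr hrho).
  have hu : pair (u Lam) (cW alphav av) = ell%:R by rewrite (word_c hAv hpair).
  have hL : Lf rhov Lam u = Lf rhov (emb alpha lam) u.
    rewrite /Lf /Lam /u (word_shift hA hpair hLam0).
    by rewrite zmod3.
  rewrite hu hL sumD (ipVDr (u Lam)) (normsqD hsym).
  set S := Lf _ _ _; set P := ipV _ _ _ _ _.
  have h2 : (2 : R) != 0 by rewrite pnatr_eq0.
  by field.
- move=> i x y Li.
  rewrite (Lf_tr hrho).
  have -> : Lf rhov Li (tr A alpha alphav a av x) = Lf rhov Li (tr A alpha alphav a av x \o id) by [].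
  rewrite (Lf_tr hrho) /= (tr_c hAv hpair).
  have -> : Lf rhov Li id = 0 by rewrite /Lf subrr pair0l.
  have hP : pair Li (cW alphav av) = (av i)%:R / (av ord0)%:R.
    rewrite /Li /LamI pairDl pairZl (Lam0_c hLam0) av0 mulr1.
    by case: (unlift ord0 i) => [j|]; rewrite ?(emb_c hAv hpair) ?pair0l addr0 ?divr1.
  rewrite (ipV_tr hA hpair) hP.
  ring.
Qed.
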